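(* Let $R$ be a DT ring. Then $R/J(R)\cong R_1\times R_2$, where $R_1$ is either the zero ring or a nonzero Boolean ring, and $R_2$ is either the zero ring or a nonzero Yaqub ring.
   Context: All rings are associative with identity. $J(R)$ is the Jacobson radical, $U(R)$ the group of units. $\Delta(R)=\{x\in R: x+u\in U(R)\text{ for all }u\in U(R)\}$. $\mathrm{Tr}(R)=\{x\in R: x^3=x\}$ (tripotent elements). A ring $R$ is a DT ring ($\Delta$-tripotent ring) if every $r\in R$ can be written $r=e+d$ with $e\in\mathrm{Tr}(R)$ and $d\in\Delta(R)$. A Boolean ring is a ring in which every element is idempotent. A Yaqub ring is a ring that is a subdirect product of copies of $\mathbb{Z}_3$ (equivalently, a ring in which $3$ is nilpotent and $x^3=x$ for all $x$). *)

(* Defs.v *)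
From HB Require Import structures.
From mathcomp Require Import all_boot all_order all_algebra.
Set Implicit Arguments. Unset Strict Implicit. Unset Printing Implicit Defensive.
Import GRing.Theory.
Local Open Scope ring_scope.

(* Rings: associative with identity, possibly noncommutative, possibly the
   zero ring: MathComp's pzRingType. Units are defined as two-sided
   invertible elements (no unitRingType structure needed). *)

Definition is_unit (R : pzRingType) (x : R) : Prop :=
  exists y : R, x * y = 1 /\ y * x = 1.

Definition Delta (R : pzRingType) (x : R) : Prop :=
  forall u : R, is_unit u -> is_unit (x + u).

Definition tripotent (R : pzRingType) (x : R) : Prop := x ^+ 3 = x.

Definition DT_ring (R : pzRingType) : Prop :=
  forall r : R, exists e d : R, tripotent e /\ Delta d /\ r = e + d.

Definition left_ideal (R : pzRingType) (I : R -> Prop) : Prop :=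
  I 0 /\ (forall x y, I x -> I y -> I (x - y)) /\
  (forall r x, I x -> I (r * x)).

Definition maximal_left_ideal (R : pzRingType) (I : R -> Prop) : Prop :=
  left_ideal I /\ ~ I 1 /\
  forall K : R -> Prop, left_ideal K -> (forall x, I x -> K x) ->
    (forall x, K x -> I x) \/ K 1.

Definition jacobson (R : pzRingType) (x : R) : Prop :=
  forall I : R -> Prop, maximal_left_ideal I -> I x.

Definition zero_ring (R : pzRingType) : Prop := forall x : R, x = 0.

Definition boolean_ring (R : pzRingType) : Prop := forall x : R, x ^+ 2 = x.

Definition yaqub_ring (R : pzRingType) : Prop :=
  (exists n : nat, (3%:R : R) ^+ n = 0) /\ forall x : R, x ^+ 3 = x.

(* Main.v *)
Require Import Defs.
From HB Require Import structures.
From mathcomp Require Import all_boot all_order all_algebra.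
From mathcomp Require Import ring.
From Stdlib Require Import ClassicalEpsilon FunctionalExtensionality PropExtensionality Classical.
Import GRing.Theory.
Local Open Scope ring_scope.

Set Implicit Arguments. Unset Strict Implicit. Unset Printing Implicit Defensive.

Record ideal2 (R : pzRingType) := Ideal2 {
  ip : R -> Prop;
  ip0 : ip 0;
  ipB : forall x y, ip x -> ip y -> ip (x - y);
  ipl : forall r x, ip x -> ip (r * x);
  ipr : forall x r, ip x -> ip (x * r) }.

Section QuotDefs.
Variables (R : pzRingType) (I : ideal2 R).
Local Notation P := (ip I).
Lemma ipN x : P x -> P (- x).
Proof. by move=> h; rewrite -sub0r; apply: ipB => //; apply: ip0. Qed.
Lemma ipD x y : P x -> P y -> P (x + y).
Proof. by move=> hx hy; rewrite -[y]opprK; apply: ipB => //; apply: ipN. Qed.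

Definition canon (x : R) : R := epsilon (inhabits (0 : R)) (fun y => P (x - y)).
Lemma canonP x : P (x - canon x).
Proof.
apply: (epsilon_spec (inhabits (0:R)) (fun y => P (x - y))).
by exists x; rewrite subrr; apply: ip0.
Qed.
Lemma canon_eq x y : P (x - y) -> canon x = canon y.
Proof.
move=> h; rewrite /canon.
have -> : (fun z => P (x - z)) = (fun z => P (y - z)) => //.
apply: functional_extensionality => z; apply: propositional_extensionality; split => hz.
- have -> : y - z = - (x - y) + (x - z) by rewrite opprB addrA subrK.
  by apply: ipD => //; apply: ipN.
- have -> : x - z = (x - y) + (y - z) by rewrite addrA subrK.
  by apply: ipD.
Qed.
Lemma canon_eqP x y : canon x = canon y -> P (x - y).
Proof.
move=> h; have -> : x - y = (x - canon x) - (y - canon y) by rewrite h opprB addrA subrK.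
by apply: ipB; apply: canonP.
Qed.
Lemma canon_id x : canon (canon x) = canon x.
Proof. apply: canon_eq; rewrite -opprB; apply: ipN; apply: canonP. Qed.
End QuotDefs.

Record Q (R : pzRingType) (I : ideal2 R) := MkQ { qval : R; qP : canon I qval == qval }.
HB.instance Definition _ (R : pzRingType) (I : ideal2 R) := [isSub for @qval R I].
HB.instance Definition _ (R : pzRingType) (I : ideal2 R) := [Equality of Q I by <:].
HB.instance Definition _ (R : pzRingType) (I : ideal2 R) := [Choice of Q I by <:].

Section QuotOps.
Variables (R : pzRingType) (I : ideal2 R).
Local Notation P := (ip I).
Definition qpi (x : R) : Q I := @MkQ R I (canon I x) (introT eqP (canon_id I x)).
Lemma qpiK (a : Q I) : qpi (qval a) = a.
Proof. by apply: val_inj => /=; apply/eqP; case: a. Qed.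
Lemma qpi_eq x y : qpi x = qpi y <-> P (x - y).
Proof.
split => [h|h]; first by apply: (canon_eqP (I:=I)); exact: (congr1 (@qval R I) h).
by apply: val_inj => /=; apply: canon_eq.
Qed.
Definition qzero := qpi 0.
Definition qone := qpi 1.
Definition qadd (a b : Q I) := qpi (qval a + qval b).
Definition qopp (a : Q I) := qpi (- qval a).
Definition qmul (a b : Q I) := qpi (qval a * qval b).
Lemma qvalE x : P (x - qval (qpi x)).
Proof. exact: canonP. Qed.
Lemma qaddE x y : qadd (qpi x) (qpi y) = qpi (x + y).
Proof.
apply/qpi_eq; have -> : qval (qpi x) + qval (qpi y) - (x + y) =
  - ((x - qval (qpi x)) + (y - qval (qpi y))).
  by rewrite [RHS]opprD !opprB addrACA -opprD.
by apply: ipN; apply: ipD; apply: qvalE.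
Qed.
Lemma qoppE x : qopp (qpi x) = qpi (- x).
Proof. apply/qpi_eq; rewrite opprK addrC; exact: qvalE. Qed.
Lemma qmulE x y : qmul (qpi x) (qpi y) = qpi (x * y).
Proof.
apply/qpi_eq; set a := qval (qpi x); set b := qval (qpi y).
have -> : a * b - x * y = - ((x - a) * b + x * (y - b)).
  by rewrite mulrBl mulrBr opprD !opprB addrA subrK.
apply: ipN; apply: ipD; [apply: ipr|apply: ipl]; apply: qvalE.
Qed.
Lemma qind (Pr : Q I -> Prop) : (forall x, Pr (qpi x)) -> forall a, Pr a.
Proof. by move=> h a; rewrite -(qpiK a). Qed.

Lemma qaddA : associative qadd.
Proof. by elim/qind=> x; elim/qind=> y; elim/qind=> z; rewrite !qaddE addrA. Qed.
Lemma qaddC : commutative qadd.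
Proof. by elim/qind=> x; elim/qind=> y; rewrite !qaddE addrC. Qed.
Lemma qadd0 : left_id qzero qadd.
Proof. by elim/qind=> x; rewrite /qzero qaddE add0r. Qed.
Lemma qaddN : left_inverse qzero qopp qadd.
Proof. by elim/qind=> x; rewrite qoppE qaddE addNr. Qed.
Lemma qmulA : associative qmul.
Proof. by elim/qind=> x; elim/qind=> y; elim/qind=> z; rewrite !qmulE mulrA. Qed.
Lemma qmul1 : left_id qone qmul.
Proof. by elim/qind=> x; rewrite /qone qmulE mul1r. Qed.
Lemma qmulr1 : right_id qone qmul.
Proof. by elim/qind=> x; rewrite /qone qmulE mulr1. Qed.
Lemma qmulDl : left_distributive qmul qadd.
Proof. by elim/qind=> x; elim/qind=> y; elim/qind=> z; rewrite !(qaddE, qmulE) mulrDl. Qed.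
Lemma qmulDr : right_distributive qmul qadd.
Proof. by elim/qind=> x; elim/qind=> y; elim/qind=> z; rewrite !(qaddE, qmulE) mulrDr. Qed.
End QuotOps.

HB.instance Definition _ (R : pzRingType) (I : ideal2 R) :=
  GRing.isZmodule.Build (Q I) (@qaddA R I) (@qaddC R I) (@qadd0 R I) (@qaddN R I).
HB.instance Definition _ (R : pzRingType) (I : ideal2 R) :=
  GRing.Zmodule_isPzRing.Build (Q I) (@qmulA R I) (@qmul1 R I) (@qmulr1 R I) (@qmulDl R I) (@qmulDr R I).

Section QuotMorph.
Variables (R : pzRingType) (I : ideal2 R).
Lemma qpi_is_mult : multiplicative (@qpi R I).
Proof. by split => [x y|] //; rewrite -qmulE. Qed.
Lemma qpi_is_zmod : zmod_morphism (@qpi R I).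
Proof. by move=> x y; rewrite -qaddE -qoppE. Qed.
Lemma qpi0 x : qpi I x = 0 <-> ip I x.
Proof. by rewrite -[0]/(qpi I 0) qpi_eq subr0. Qed.
End QuotMorph.

HB.instance Definition _ (R : pzRingType) (I : ideal2 R) :=
  GRing.isZmodMorphism.Build R (Q I) (qpi I) (@qpi_is_zmod R I).
HB.instance Definition _ (R : pzRingType) (I : ideal2 R) :=
  GRing.isMultiplicative.Build R (Q I) (qpi I) (@qpi_is_mult R I).

Definition nzcopy (R : pzRingType) (h : (1 : R) != 0) : Type := R.
HB.instance Definition _ (R : pzRingType) (h : (1 : R) != 0) := GRing.PzRing.on (@nzcopy R h).
HB.instance Definition _ (R : pzRingType) (h : (1 : R) != 0) :=
  GRing.PzSemiRing_isNonZero.Build (@nzcopy R h) h.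

Definition cfy (R : pzRingType) (h : (1 : R) != 0) (y : @nzcopy R h) :
   commr_rmorph ( *~%R (1 : @nzcopy R h)) y := fun n => commr_int y n.

Lemma zero_ring_all (R : pzRingType) (x y : R) : (1 : R) = 0 -> x = y.
Proof. by move=> h; rewrite -[x]mulr1 -[y]mulr1 h !mulr0. Qed.


Ltac polytac R y E :=
  let h := fresh "h" in
  have [h|h] := eqVneq (1 : R) 0; [exact: zero_ring_all | ];
  let phi := fresh "phi" in
  pose phi : {rmorphism {poly int} -> @nzcopy R h} := horner_morph (@cfy R h y);
  let phiX := fresh "phiX" in
  have phiX : phi 'X = y := horner_morphX (@cfy R h y);
  have := congr1 phi E;
  rewrite !(rmorphD, rmorphB, rmorphM, rmorphN, rmorphXn, rmorph_nat, rmorph1) phiX;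
  let H := fresh "H" in move=> H; exact: H.


Section Units.
Variable R : pzRingType.
Implicit Types a b c u v d x y : R.

Lemma unit1 : is_unit (1 : R).
Proof. by exists 1; rewrite mulr1. Qed.
Lemma unitN u : is_unit u -> is_unit (- u).
Proof. by case=> w [h1 h2]; exists (- w); rewrite mulrNN h1 mulrNN h2. Qed.
Lemma unitM u v : is_unit u -> is_unit v -> is_unit (u * v).
Proof.
case=> a [ha1 ha2] [b [hb1 hb2]]; exists (b * a); split.
  by rewrite mulrA -(mulrA u) hb1 mulr1.
by rewrite mulrA -(mulrA b) ha2 mulr1.
Qed.
Lemma unit_inv u : is_unit u -> exists w, [/\ is_unit w, u * w = 1 & w * u = 1].
Proof. by case=> w [h1 h2]; exists w; split => //; exists u. Qed.
Lemma unit_cancel u x : is_unit u -> u * x = 0 -> x = 0.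
Proof. by case=> w [_ h2] h; rewrite -[x]mul1r -h2 -mulrA h mulr0. Qed.

Lemma DeltaN d : Delta d -> Delta (- d).
Proof.
move=> hd u hu; have := unitN (hd _ (unitN hu)); by rewrite opprD opprK.
Qed.
Lemma DeltaD a b : Delta a -> Delta b -> Delta (a + b).
Proof. by move=> ha hb u hu; rewrite -addrA; apply: ha; apply: hb. Qed.
Lemma Delta_mulr d v : Delta d -> is_unit v -> Delta (d * v).
Proof.
move=> hd hv u hu; have [w [hw h1 h2]] := unit_inv hv.
have -> : d * v + u = (d + u * w) * v by rewrite mulrDl -mulrA h2 mulr1.
by apply: unitM => //; apply: hd; apply: unitM.
Qed.
Lemma Delta_mull d v : Delta d -> is_unit v -> Delta (v * d).
Proof.
move=> hd hv u hu; have [w [hw h1 h2]] := unit_inv hv.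
have -> : v * d + u = v * (d + w * u) by rewrite mulrDr mulrA h1 mul1r.
by apply: unitM => //; apply: hd; apply: unitM.
Qed.
Lemma Delta_unit_sub d : Delta d -> is_unit (1 - d).
Proof. by move=> hd; rewrite addrC; apply: (DeltaN hd); apply: unit1. Qed.
Lemma one_sub_DD a c : Delta a -> Delta c -> is_unit (1 - a * c).
Proof.
move=> ha hc.
have -> : 1 - a * c = a * (1 - c) + (1 - a) by rewrite mulrBr mulr1 addrAC addrCA subrr addr0.
by apply: (Delta_mulr ha (Delta_unit_sub hc)); apply: Delta_unit_sub.
Qed.
End Units.

Section Ideals.
Variable R : pzRingType.
Implicit Types M K : R -> Prop.
Implicit Types x y r s : R.

Lemma li_add M x y : left_ideal M -> M x -> M y -> M (x + y).
Proof.
case=> h0 [hB hl] hx hy; rewrite -[y]opprK -[- y]sub0r.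
by apply: (hB) => //; apply: (hB).
Qed.
Lemma li_opp M x : left_ideal M -> M x -> M (- x).
Proof. by case=> h0 [hB hl] hx; rewrite -sub0r; apply: hB. Qed.
Lemma li_sub M x y : left_ideal M -> M x -> M y -> M (x - y).
Proof. by case=> h0 [hB hl]; apply: hB. Qed.
Lemma li_mul M r x : left_ideal M -> M x -> M (r * x).
Proof. by case=> h0 [hB hl]; apply: hl. Qed.

Lemma max_unit M u : maximal_left_ideal M -> is_unit u -> M u -> False.
Proof.
case=> hM [h1 _] [w [_ hw]] hu; apply: h1; rewrite -hw; exact: li_mul.
Qed.

Lemma max_gen M z : maximal_left_ideal M -> ~ M z -> exists c, M (1 - c * z).
Proof.
move=> hmax hz; have [hM [h1 hK]] := hmax.
pose K y := exists m c, M m /\ y = m + c * z.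
have lK : left_ideal K.
  split; first by exists 0, 0; rewrite mul0r addr0; split => //; case: hM.
  split.
    move=> x y [m1 [c1 [hm1 ->]]] [m2 [c2 [hm2 ->]]].
    exists (m1 - m2), (c1 - c2); split; first exact: li_sub.
    by rewrite mulrBl opprD addrACA.
  move=> r x [m [c [hm ->]]]; exists (r * m), (r * c); split; first exact: li_mul.
  by rewrite mulrDr mulrA.
have sMK : forall x, M x -> K x by move=> x hx; exists x, 0; rewrite mul0r addr0.
have [sub|k1] := hK K lK sMK.
  by exfalso; apply: hz; apply: sub; exists 0, 1; rewrite mul1r add0r; split => //; case: hM.
case: k1 => m [c [hm e]]; exists c; by rewrite e addrK.
Qed.

Lemma jac0 : jacobson (0 : R).
Proof. by move=> M [[h _] _]. Qed.
Lemma jacB x y : jacobson x -> jacobson y -> jacobson (x - y).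
Proof. by move=> hx hy M hM; apply: li_sub; [case: hM| apply: hx | apply: hy]. Qed.
Lemma jacl r x : jacobson x -> jacobson (r * x).
Proof. by move=> hx M hM; apply: li_mul; [case: hM| apply: hx]. Qed.

Lemma jacr x s : jacobson x -> jacobson (x * s).
Proof.
move=> hx M hmax; have [hM [h1 hK]] := hmax.
case: (classic (M s)) => hs; first exact: li_mul.
pose M' t := M (t * s).
suff : maximal_left_ideal M' by move/hx.
split.
  split; first by rewrite /M' mul0r; case: hM.
  split; first by move=> a b ha hb; rewrite /M' mulrBl; apply: li_sub.
  by move=> r a ha; rewrite /M' -mulrA; apply: li_mul.
split; first by rewrite /M' mul1r.
move=> K lK sKM.
case: (classic (forall y, K y -> M' y)) => [|nK]; first by left.
right; have [k [hk hks]] : exists k, K k /\ ~ M (k * s).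
  by apply: NNPP => hn; apply: nK => y hy; apply: NNPP => hy'; apply: hn; exists y.
have [b hb] := max_gen hmax hks.
have h2 : M' (1 - s * b * k).
  rewrite /M'; have -> : (1 - s * b * k) * s = s * (1 - b * (k * s)).
    by rewrite mulrBl mulrBr mul1r mulr1 !mulrA.
  exact: li_mul.
have -> : (1 : R) = (1 - s * b * k) + s * b * k by rewrite subrK.
by apply: li_add => //; [apply: sKM | apply: li_mul].
Qed.

Definition Jid : ideal2 R := Ideal2 jac0 jacB jacl jacr.
End Ideals.

Lemma zmod_aux (V : zmodType) (x p q r : V) : x - (p + r) = (x - (p + q)) - (r - q).
Proof. by rewrite opprB !opprD !addrA addrNK. Qed.

Lemma sq0_unit (R : pzRingType) (n : R) : n * n = 0 -> is_unit (1 + n).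
Proof.
move=> hn; exists (1 - n); split.
  by rewrite mulrDl mul1r mulrBr mulr1 hn subr0 subrK.
by rewrite mulrBl mul1r mulrDr mulr1 hn addr0 addrK.
Qed.

Section DT.
Variable R : pzRingType.
Hypothesis hR : DT_ring R.
Implicit Types a b c d e x y r : R.

Lemma tri3 e : tripotent e -> e * (e * e) = e.
Proof. by rewrite /tripotent !exprS expr0 mulr1. Qed.

Lemma Delta_jac d : Delta d -> jacobson d.
Proof.
move=> hd M hmax; have [hM [h1 hK]] := hmax.
case: (classic (M d)) => // hnd; exfalso.
have [y hy] := max_gen hmax hnd.
have [e [dl [he [hdl ey]]]] := hR y.
have e3 := tri3 he.
pose u1 := 1 - dl * d.
have hu1 : is_unit u1 by apply: one_sub_DD.
have hM1 : M (u1 - e * d).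
  by move: hy; rewrite ey mulrDl opprD addrA addrAC.
clearbody u1.
pose f := e * e.
have F1 : e * f = e by [].
have F3 : f * f = f by rewrite /f -mulrA [e * (e * e)]e3.
pose g := 1 - f.
pose w := e + g.
have hw : w * w = 1.
  have E : ('X + (1 - 'X * 'X)) * ('X + (1 - 'X * 'X)) =
     1 + ('X - 2%:R) * ('X * ('X * 'X) - 'X) :> {poly int} by ring.
  have : (e + (1 - e * e)) * (e + (1 - e * e)) = 1 + (e - 2%:R) * (e * (e * e) - e).
    polytac R e E.
  by rewrite e3 subrr mulr0 addr0.
have hwu : is_unit w by exists w.
have F5 : w * e = f.
  rewrite /w /g mulrDl mulrBl mul1r -/f /f -mulrA e3. by rewrite subrr addr0.
have fg : f * g = 0 by rewrite /g mulrBr mulr1 F3 subrr.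
have h3 : d = f * d + g * d by rewrite /g mulrBl mul1r addrC subrK.
clearbody w g f.
have hnfd : ~ M (f * d).
  move=> hfd; apply: (max_unit hmax hu1).
  have -> : u1 = (u1 - e * d) + e * (f * d) by rewrite mulrA F1 subrK.
  by apply: li_add; [exact: hM | exact: hM1 | exact: li_mul hM hfd].
have [c0 hc0] := max_gen hmax hnfd.
pose c := d * c0.
have hc : M (d - c * (f * d)).
  have := li_mul d hM hc0; by rewrite mulrBr mulr1 mulrA.
clearbody c.
pose A := 1 + g * c * f.
have hA : is_unit A.
  apply: sq0_unit; have -> : g * c * f * (g * c * f) = g * c * (f * g) * (c * f) by rewrite !mulrA.
  by rewrite fg mulr0 mul0r.
have k1 : w * (e * d) = f * d by rewrite mulrA F5.
have h2 : A * (f * d) = f * d + g * (c * (f * d)).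
  by rewrite /A mulrDl mul1r -!mulrA [f * (f * d)]mulrA F3.
have hW : A * w * u1 - d = A * w * (u1 - e * d) - g * (d - c * (f * d)).
  rewrite mulrBr -(mulrA A w (e * d)) k1 h2 mulrBr.
  rewrite {1}h3; exact: zmod_aux.
apply: (max_unit hmax (u := A * w * u1 - d)).
  by rewrite addrC; apply: (DeltaN hd); apply: unitM => //; apply: unitM.
rewrite hW; apply: li_sub; [exact: hM | exact: li_mul hM hM1 | exact: li_mul hM hc].
Qed.

Lemma Delta6 : Delta (6%:R : R).
Proof.
have [e [d0 [he [hd0 e2]]]] := hR 2%:R.
have e3 := tri3 he.
have hd0e : d0 = 2%:R - e by rewrite e2 [e + d0]addrC addrK.
have hu : is_unit (1 - e).
  have := hd0 _ (unitN (unit1 R)).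
  have -> : d0 + -1 = 1 - e.
    by rewrite hd0e addrAC mulr2n addrK.
  by [].
have hee : e * e + e = 0.
  apply: (unit_cancel hu).
  have E : (1 - 'X) * ('X * 'X + 'X) = 'X - 'X * ('X * 'X) :> {poly int} by ring.
  have : (1 - e) * (e * e + e) = e - e * (e * e) by polytac R e E.
  by rewrite e3 subrr.
have hv : is_unit (1 - 2%:R * (e * e)).
  exists (1 - 2%:R * (e * e)).
  have E : (1 - 2%:R * ('X * 'X)) * (1 - 2%:R * ('X * 'X)) =
     1 + 4%:R * 'X * ('X * ('X * 'X) - 'X) :> {poly int} by ring.
  have : (1 - 2%:R * (e * e)) * (1 - 2%:R * (e * e)) =
     1 + 4%:R * e * (e * (e * e) - e) by polytac R e E.
  by rewrite e3 subrr mulr0 addr0.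
have := Delta_mulr hd0 (hd0 _ hv).
have E : (2%:R - 'X) * ((2%:R - 'X) + (1 - 2%:R * ('X * 'X))) =
   6%:R - 3%:R * ('X * 'X + 'X) + 2%:R * ('X * ('X * 'X) - 'X) :> {poly int} by ring.
have : (2%:R - e) * ((2%:R - e) + (1 - 2%:R * (e * e))) =
   6%:R - 3%:R * (e * e + e) + 2%:R * (e * (e * e) - e) by polytac R e E.
by rewrite hee e3 subrr !mulr0 subr0 addr0 -hd0e => ->.
Qed.

Lemma jac6 : jacobson (6%:R : R).
Proof. exact: Delta_jac Delta6. Qed.

Lemma jac6r x : jacobson (6%:R * x).
Proof. by rewrite mulr_natl -mulr_natr; apply: jacl; apply: jac6. Qed.

Lemma ideal_cube (I : ideal2 R) a x : ip I x -> ip I ((a + x) ^+ 3 - a ^+ 3).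
Proof.
have prodD : forall a b x y, ip I x -> ip I y -> ip I ((a + x) * (b + y) - a * b).
  move=> a' b x' y hx hy.
  have -> : (a' + x') * (b + y) - a' * b = a' * y + (x' * b + x' * y).
    by rewrite mulrDl !mulrDr addrAC (addrAC (a' * b)) subrr add0r.
  by apply: ipD; [apply: ipl | apply: ipD; [apply: ipr | apply: ipl]].
move=> hx; rewrite !exprS expr0 !mulr1.
have h2 := prodD a a x x hx hx.
rewrite -[(a + x) * (a + x)](subrK (a * a)) [_ - _ + a * a]addrC.
exact: prodD.
Qed.

Lemma jac_cube r : jacobson (r ^+ 3 - r).
Proof.
have [e [dl [he [hdl ->]]]] := hR r.
have hj := Delta_jac hdl.
have -> : (e + dl) ^+ 3 - (e + dl) = ((e + dl) ^+ 3 - e ^+ 3) - dl.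
  by rewrite he opprD addrA.
apply: jacB => //; exact: (ideal_cube (I := Jid R)).
Qed.
End DT.

Lemma jacD (R : pzRingType) (x y : R) : jacobson x -> jacobson y -> jacobson (x + y).
Proof. by move=> hx hy M hM; apply: li_add; [case: hM | apply: hx | apply: hy]. Qed.

Section Scaled.
Variables (R : pzRingType) (n : nat).
Definition sc_ip (x : R) := jacobson (n%:R * x).
Lemma sc0 : sc_ip 0. Proof. by rewrite /sc_ip mulr0; apply: jac0. Qed.
Lemma scB x y : sc_ip x -> sc_ip y -> sc_ip (x - y).
Proof. by rewrite /sc_ip mulrBr; apply: jacB. Qed.
Lemma scl r x : sc_ip x -> sc_ip (r * x).
Proof. by move=> h; rewrite /sc_ip mulrA -(commr_nat r n) -mulrA; apply: jacl. Qed.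
Lemma scr x r : sc_ip x -> sc_ip (x * r).
Proof. by rewrite /sc_ip mulrA; apply: jacr. Qed.
Definition Isc : ideal2 R := Ideal2 sc0 scB scl scr.
End Scaled.

Definition fpair (R : pzRingType) (I1 I2 : ideal2 R) (x : R) : Q I1 * Q I2 :=
  (qpi I1 x, qpi I2 x).
Lemma fpair_zmod (R : pzRingType) (I1 I2 : ideal2 R) : zmod_morphism (fpair I1 I2).
Proof. by move=> x y; rewrite /fpair !rmorphB. Qed.
Lemma fpair_mult (R : pzRingType) (I1 I2 : ideal2 R) : multiplicative (fpair I1 I2).
Proof. by split => [x y|]; rewrite /fpair ?rmorphM ?rmorph1. Qed.
HB.instance Definition _ (R : pzRingType) (I1 I2 : ideal2 R) :=
  GRing.isZmodMorphism.Build R (Q I1 * Q I2)%type (fpair I1 I2) (@fpair_zmod R I1 I2).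
HB.instance Definition _ (R : pzRingType) (I1 I2 : ideal2 R) :=
  GRing.isMultiplicative.Build R (Q I1 * Q I2)%type (fpair I1 I2) (@fpair_mult R I1 I2).

Lemma lin1 (R : pzRingType) (a b : R) :
  3%:R * (3%:R * a + 4%:R * b - a) = 6%:R * a + 6%:R * (2%:R * b).
Proof.
rewrite mulrBr mulrDr !mulrA -!natrM addrAC -mulrBl -natrB //.
Qed.
Lemma lin2 (R : pzRingType) (a b : R) :
  4%:R * (3%:R * a + 4%:R * b - b) = 6%:R * (2%:R * a) + 6%:R * (2%:R * b).
Proof.
rewrite mulrBr mulrDr !mulrA -!natrM -addrA -mulrBl -natrB //.
Qed.
Lemma lin3 (R : pzRingType) (x : R) : 4%:R * x - 3%:R * x = x.
Proof. by rewrite -mulrBl -natrB // mul1r. Qed.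
Lemma lin4 (R : pzRingType) (y : R) :
  3%:R * (y ^+ 2 - y) = ((y + 1) ^+ 3 - (y + 1)) - (y ^+ 3 - y) - 6%:R * y.
Proof.
have E : 3%:R * (('X)^+2 - 'X) = (('X + 1)^+3 - ('X + 1)) - (('X)^+3 - 'X) - 6%:R * 'X
  :> {poly int} by ring.
polytac R y E.
Qed.

Unset Implicit Arguments.

(* R/J(R) ≅ R1 × R2 is expressed via the first isomorphism theorem:
   a surjective ring morphism f : R -> R1 × R2 whose kernel is J(R). *)
Theorem theorem4p8 (R : pzRingType) (hR : DT_ring R) :
  exists (R1 R2 : pzRingType) (f : {rmorphism R -> R1 * R2}),
    (forall y : R1 * R2, exists x : R, f x = y) /\
    (forall x : R, f x = 0 <-> jacobson x) /\
    (zero_ring R1 \/ (~ zero_ring R1 /\ boolean_ring R1)) /\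
    (zero_ring R2 \/ (~ zero_ring R2 /\ yaqub_ring R2)).
Proof.
pose I1 := Isc R 3; pose I2 := Isc R 4.
exists (Q I1), (Q I2), (fpair I1 I2 : {rmorphism R -> Q I1 * Q I2}).
split.
  case=> a b; exists (3%:R * qval a + 4%:R * qval b); rewrite /= /fpair.
  congr pair.
    rewrite -[RHS](qpiK a); apply/(@qpi_eq _ I1); change (jacobson (3%:R * (3%:R * qval a + 4%:R * qval b - qval a))).
    by rewrite lin1; apply: jacD; apply: jac6r.
  rewrite -[RHS](qpiK b); apply/(@qpi_eq _ I2); change (jacobson (4%:R * (3%:R * qval a + 4%:R * qval b - qval b))).
  by rewrite lin2; apply: jacD; apply: jac6r.
split.
  move=> x; split.
    rewrite /= /fpair => h.
    have /qpi0 h1 : qpi I1 x = 0 by have := congr1 fst h.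
    have /qpi0 h2 : qpi I2 x = 0 by have := congr1 snd h.
    rewrite -(lin3 x); exact: jacB.
  move=> hx; rewrite /= /fpair.
  have -> : qpi I1 x = 0 by apply/qpi0; apply: jacl.
  have -> : qpi I2 x = 0 by apply/qpi0; apply: jacl.
  by [].
split.
  case: (classic (zero_ring (Q I1))) => hz; [by left | right; split => //].
  elim/qind => y; rewrite -rmorphXn; apply/qpi_eq.
  change (jacobson (3%:R * (y ^+ 2 - y))); rewrite lin4.
  apply: jacB; last by apply: jac6r.
  by apply: jacB; apply: jac_cube.
case: (classic (zero_ring (Q I2))) => hz; [by left | right; split => //].
split.
  exists 1%N; rewrite expr1 -(rmorph_nat (qpi I2)); apply/qpi0.
  change (jacobson (4%:R * 3%:R : R)); rewrite -natrM (_ : (4 * 3 = 6 * 2)%N) // natrM.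
  exact: jac6r.
elim/qind => y; rewrite -rmorphXn; apply/qpi_eq.
change (jacobson (4%:R * (y ^+ 3 - y))); apply: jacl; exact: jac_cube.
Qed.
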